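(* Let $\mathcal{G}$ be a directed acyclic graph over variables $\mathbf{V}=\mathbf{O}\cup\mathbf{L}$ (observed and latent), let $X\in\mathbf{O}$ and let $Y$ be a variable of $\mathcal{G}$, and let $\Pi$ be the policy space with policy inputs $\mathbf{Pa}^\Pi\subseteq\mathbf{O}\setminus\mathbf{De}(X)$. If there exists a $\pi$-backdoor admissible set with respect to $\langle\mathcal{G},\Pi\rangle$, then $\mathbf{Z}=\mathbf{An}(\{X,Y\})\cap\mathbf{Pa}^\Pi$ is a $\pi$-backdoor admissible set with respect to $\langle\mathcal{G},\Pi\rangle$.
   Context: $\mathbf{An}(\cdot)$ and $\mathbf{De}(\cdot)$ denote ancestors and descendants in $\mathcal{G}$. A policy is a stochastic mapping $\pi(X\mid\mathbf{Pa}^\Pi)$ from values of $\mathbf{Pa}^\Pi$ to distributions over $X$; the policy space $\Pi$ is the set of all such mappings. $\mathcal{G}_{\underline{X}}$ denotes the graph obtained from $\mathcal{G}$ by removing all edges outgoing from $X$. A set $\mathbf{Z}$ is $\pi$-backdoor admissible w.r.t. $\langle\mathcal{G},\Pi\rangle$ iff $\mathbf{Z}\subseteq\mathbf{Pa}^\Pi$ and $Y$ is d-separated from $X$ by $\mathbf{Z}$ in $\mathcal{G}_{\underline{X}}$. *)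

(* Defs.v *)
From mathcomp Require Import all_boot.
Set Implicit Arguments. Unset Strict Implicit. Unset Printing Implicit Defensive.

Section Graphs.
Variable V : finType.

(* A directed graph over V is an edge relation e (e u v means u -> v). *)
Definition acyclic (e : rel V) : Prop :=
  forall (x : V) (p : seq V), path e x p -> last x p = x -> p = [::].

Definition anc (e : rel V) (S : {set V}) : {set V} :=
  [set v | [exists w in S, connect e v w]].

Definition desc (e : rel V) (x : V) : {set V} := [set v | connect e x v].

Definition remove_out (e : rel V) (x : V) : rel V :=
  [rel u v | e u v && (u != x)].

Definition adj (e : rel V) : rel V := [rel u v | e u v || e v u].

Definition blocked (e : rel V) (Z : {set V}) (x0 : V) (s : seq V) : Prop :=
  exists i : nat, 0 < i < (size s).-1 /\
    let a := nth x0 s i.-1 in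
    let b := nth x0 s i in
    let c := nth x0 s i.+1 in
    if e a b && e c b then [disjoint desc e b & Z] else b \in Z.

Definition dsep (e : rel V) (x y : V) (Z : {set V}) : Prop :=
  forall p : seq V, path (adj e) x p -> last x p = y -> uniq (x :: p) ->
    blocked e Z x (x :: p).

(* pi-backdoor admissibility w.r.t. <G, Pi>, where Pi is the policy space
   with inputs Pa (only Pa matters). *)
Definition pi_backdoor (e : rel V) (Pa : {set V}) (X Y : V) (Z : {set V})
  : Prop :=
  Z \subset Pa /\ dsep (remove_out e X) X Y Z.

End Graphs.

(* Main.v *)
Require Import Defs.
From mathcomp Require Import all_boot.
Set Implicit Arguments. Unset Strict Implicit. Unset Printing Implicit Defensive.

Fixpoint trs {T : Type} (s : seq T) : seq (T * T * T) :=
  match s with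
  | a :: ((b :: c :: _) as t) => (a, b, c) :: trs t
  | _ => [::]
  end.

Definition jn {T : Type} (s : seq T) (b : T) (t : seq T) : seq (T * T * T) :=
  match s, t with
  | x :: s', c :: _ => [:: (last x s', b, c)]
  | _, _ => [::]
  end.

Lemma trs3 {T : Type} (a b c : T) r : trs [:: a, b, c & r] = (a, b, c) :: trs [:: b, c & r].
Proof. by []. Qed.

Lemma trs_catw {T : Type} (s : seq T) b t :
  trs (s ++ b :: t) = trs (rcons s b) ++ jn s b t ++ trs (b :: t).
Proof.
elim: s => [|x s IH] //.
case: s IH => [|x' s] IH.
  by clear IH; case: t => [|c t].
have -> : jn [:: x, x' & s] b t = jn (x' :: s) b t by case: t {IH}.
case: s IH => [|z s] IH.
  rewrite /=; rewrite /= in IH; by rewrite IH.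
rewrite [in LHS]cat_cons [in LHS]cat_cons [in LHS]cat_cons trs3 -[in LHS]cat_cons -[in LHS]cat_cons IH.
by rewrite rcons_cons rcons_cons rcons_cons trs3 -rcons_cons.
Qed.

Lemma in_trs {T : eqType} (s : seq T) a b c : (a, b, c) \in trs s -> b \in s.
Proof.
elim: s => [|x s IH] //.
case: s IH => [|y s] IH //; case: s IH => [|z s] IH //.
rewrite trs3 in_cons => /orP[/eqP[_ -> _]|/IH]; rewrite !in_cons ?eqxx ?orbT //.
by move=> ->; rewrite !orbT.
Qed.

Lemma in_trs_cons {T : eqType} (w : T) s a b c : (a, b, c) \in trs (w :: s) -> b \in s.
Proof.
case: s => [|y s] //; case: s => [|z s] //.
rewrite trs3 in_cons => /orP[/eqP[_ -> _]|/in_trs]; by rewrite in_cons ?eqxx.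
Qed.

Lemma in_trs_rcons {T : eqType} (s : seq T) w a b c : (a, b, c) \in trs (rcons s w) -> b \in s.
Proof.
elim: s => [|x s IH] //.
case: s IH => [|y s] IH; first by [].
rewrite !rcons_cons.
have [z [r Hr]] : exists z r, rcons s w = z :: r.
  by case: s {IH} => [|u s]; do 2 eexists.
rewrite Hr trs3 -Hr -rcons_cons in_cons => /orP[/eqP[_ -> _]|/IH].
  by rewrite !in_cons eqxx orbT.
by rewrite in_cons => ->; rewrite orbT.
Qed.

Lemma sorted_trs {T : eqType} (r : rel T) (s : seq T) : sorted r s ->
  forall a b c, (a, b, c) \in trs s -> r a b && r b c.
Proof.
elim: s => [|x s IH] //.
case: s IH => [|y s] IH //; case: s IH => [|z s] IH //.
move=> /andP[rxy H] a b c; rewrite trs3 in_cons => /orP[/eqP[-> -> ->]|].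
  by rewrite rxy; case/andP: H.
exact: IH.
Qed.

Lemma size_trs {T : Type} (s : seq T) : size (trs s) = (size s).-2.
Proof.
elim: s => [|x s IH] //.
case: s IH => [|y s] IH //; case: s IH => [|z s] IH //.
by rewrite trs3 /= IH.
Qed.

Lemma nth_trs {T : Type} (x0 : T) (s : seq T) j : j.+2 < size s ->
  nth (x0, x0, x0) (trs s) j = (nth x0 s j, nth x0 s j.+1, nth x0 s j.+2).
Proof.
elim: s j => [|x s IH] j //.
case: s IH => [|y s] IH //; case: s IH => [|z s] IH //.
rewrite trs3; case: j => [|j] //= Hj.
by rewrite IH.
Qed.

Lemma sorted_catw {T : Type} (r : rel T) s w t :
  sorted r (s ++ w :: t) = sorted r (rcons s w) && sorted r (w :: t).
Proof.
case: s => [|x s] /=; first by [].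
by rewrite cat_path rcons_path /= andbA.
Qed.

Lemma first_in {T : Type} (P : pred T) s : has P s ->
  exists s1 w s2, [/\ s = s1 ++ w :: s2, P w & ~~ has P s1].
Proof.
elim: s => [|x s IH] //= /orP[Px|Hs].
  by exists [::], x, s.
case Px: (P x).
  by exists [::], x, s.
have [s1 [w [s2 [-> Pw Hn]]]] := IH Hs.
by exists (x :: s1), w, s2; rewrite /= Px.
Qed.

Lemma last_in {T : Type} (P : pred T) s : has P s ->
  exists s1 w s2, [/\ s = s1 ++ w :: s2, P w & ~~ has P s2].
Proof.
elim: s => [|x s IH] //= /orP[Px|Hs].
  case Hs: (has P s).
    have [s1 [w [s2 [-> Pw Hn]]]] := IH Hs.
    by exists (x :: s1), w, s2.
  by exists [::], x, s; rewrite Hs.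
have [s1 [w [s2 [-> Pw Hn]]]] := IH Hs.
by exists (x :: s1), w, s2.
Qed.

Lemma split_in {T : eqType} (x : T) s : x \in s -> exists s1 s2, s = s1 ++ x :: s2.
Proof.
elim: s => [|y s IH] //; rewrite in_cons => /orP[/eqP->|/IH[s1 [s2 ->]]].
  by exists [::], s.
by exists (y :: s1), s2.
Qed.

Definition fZ {V : finType} (E : rel V) (Zs : {set V}) (t : V * V * V) : bool :=
  let: (a, b, c) := t in
  if E a b && E c b then ~~ [disjoint desc E b & Zs] else b \notin Zs.

Lemma blocked_has (V : finType) (E : rel V) Zs (x0 : V) s :
  blocked E Zs x0 s <-> has (predC (fZ E Zs)) (trs s).
Proof.
split.
  move=> [i [/andP[Hi1 Hi2] H]]; apply/(has_nthP (x0, x0, x0)).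
  have Hs : i.-1.+2 < size s by rewrite prednK //; case: (size s) Hi2 => //= n; rewrite ltnS.
  exists i.-1; first by rewrite size_trs; case: (size s) Hs => [|[|n]] //.
  rewrite nth_trs // prednK //= /fZ.
  by move: H => /=; case: ifP => _ ->.
move=> /(has_nthP (x0, x0, x0)) [j]; rewrite size_trs => Hj.
have Hs : j.+2 < size s by case: (size s) Hj => [|[|n]] //.
rewrite nth_trs // /= /fZ => H.
exists j.+1; split; first by apply/andP; split => //; case: (size s) Hs => [|n] //.
by move: H => /=; case: ifP => _ //; rewrite negbK.
Qed.

Definition AE {V : finType} (E : rel V) (x y : V) (b : V) : bool :=
  connect E b x || connect E b y.

Definition Inv {V : finType} (E : rel V) (Z : {set V}) (x y : V) (t : V * V * V) : bool :=
  let: (a, b, c) := t in if E a b && E c b then AE E x y b else b \notin Z.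

Definition bad {V : finType} (E : rel V) (Z : {set V}) (t : V * V * V) : bool :=
  let: (a, b, c) := t in [&& E a b, E c b & [disjoint desc E b & Z]].

Definition Cp {V : finType} (E : rel V) (x y : V) (s : seq V) : Prop :=
  [/\ s != [::], head x s = x, last x s = y, sorted (adj E) s & uniq s].

Lemma step_fwd (V : finType) (E : rel V) (Z : {set V}) (x y : V) s a c b :
  (forall u v, E u v -> E v u -> False) -> Cp E x y s -> all (Inv E Z x y) (trs s) ->
  (a, c, b) \in trs s -> bad E Z (a, c, b) -> connect E c y ->
  exists s', [/\ Cp E x y s', all (Inv E Z x y) (trs s') &
     count (bad E Z) (trs s') < count (bad E Z) (trs s)].
Proof.
move=> no2 [ne hd lt so un] HI Hin Hbad Hcy.
have Hdis : [disjoint desc E c & Z] by case/and3P: Hbad.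
have cnZ : forall w, connect E c w -> w \notin Z.
  by move=> w Hw; rewrite (disjointFr Hdis) // inE.
case/connectP: Hcy => p0 Hp0 Hl0.
move: Hl0; case: (shortenP Hp0) => p' Hp' Hu _ Hl0.
set dd := c :: p'.
have ddc : forall v, v \in dd -> connect E c v by move=> v; apply: path_connect.
have cs : c \in s := in_trs Hin.
have Hhas : has (mem dd) s by apply/hasP; exists c => //; rewrite /= mem_head.
have [s1 [w [s2 [Es wd Hn]]]] := first_in Hhas.
have wd' : w \in dd := wd.
have [d1 [d2 Ed]] := split_in wd'.
have sodd : sorted E dd := Hp'.
have sow : sorted E (w :: d2) by move: sodd; rewrite Ed sorted_catw => /andP[].
have Ewn : forall v, v \in w :: d2 -> v \notin Z.
  by move=> v Hv; apply: cnZ; apply: ddc; rewrite Ed mem_cat Hv orbT.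
have HT : forall t, t \in trs (w :: d2) -> Inv E Z x y t && ~~ bad E Z t.
  move=> [[a' b'] c'] Ht; have /andP[E1 E2] := sorted_trs sow Ht.
  have E3 : E c' b' = false by apply/negP => E3; exact: (no2 _ _ E2 E3).
  by rewrite /Inv /bad E3 andbF /= (Ewn b' (in_trs Ht)).
have HJ : forall t, t \in jn s1 w d2 -> Inv E Z x y t && ~~ bad E Z t.
  move=> [[a' b'] c']; case: s1 {Es Hn} => [|z1 s1] //; case: d2 sow HT Ewn {Ed} => [|h d2] // sow _ Ewn.
  rewrite /jn inE => /eqP[_ -> ->].
  have E2 : E w h by case/andP: sow.
  have E3 : E h w = false by apply/negP => E3; exact: (no2 _ _ E2 E3).
  by rewrite /Inv /bad E3 andbF /= (Ewn w) // mem_head.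
exists (s1 ++ w :: d2); split.
- split.
  + by case: s1 {Es Hn HJ}.
  + by move: hd; rewrite Es; case: s1 {Es Hn HJ}.
  + rewrite last_cat /=.
    have : last x dd = y by rewrite /= Hl0.
    by rewrite Ed last_cat.
  + rewrite sorted_catw; move: so; rewrite Es sorted_catw => /andP[-> _] /=.
    by apply: (sub_path _ sow) => u v Huv; rewrite /adj /= Huv.
  + rewrite cat_uniq; move: un; rewrite Es cat_uniq => /and3P[-> _ _] /=.
    apply/andP; split.
      have H : ~~ has (mem s1) (w :: d2).
        apply/negP => /hasP [v Hv Hv1]; move/negP: Hn; apply; apply/hasP; exists v => //.
        by rewrite /= Ed mem_cat Hv orbT.
      exact: H.
    by move: Hu; rewrite -/dd Ed cat_uniq => /and3P[_ _ H]; exact: H.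
- rewrite trs_catw !all_cat; move: HI; rewrite Es trs_catw !all_cat => /andP[-> _] /=.
  apply/andP; split; apply/allP => t Ht.
    by case/andP: (HJ t Ht).
  by case/andP: (HT t Ht).
- have c0 : forall l, (forall t, t \in l -> Inv E Z x y t && ~~ bad E Z t) -> count (bad E Z) l = 0.
    move=> l Hl; apply/eqP; rewrite -leqn0 leqNgt -has_count; apply/hasPn => t Ht.
    by case/andP: (Hl t Ht).
  rewrite Es !trs_catw !count_cat (c0 _ HJ) (c0 _ HT) ltn_add2l -count_cat -has_count.
  apply/hasP; exists (a, c, b) => //.
  move: Hin; rewrite Es trs_catw !mem_cat => /orP[/in_trs_rcons Hc|] //.
  by move/hasP: Hn => []; exists c; rewrite //= mem_head.
Qed.

Lemma step_bwd (V : finType) (E : rel V) (Z : {set V}) (x y : V) s a c b :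
  (forall u v, E u v -> E v u -> False) -> Cp E x y s -> all (Inv E Z x y) (trs s) ->
  (a, c, b) \in trs s -> bad E Z (a, c, b) -> connect E c x ->
  exists s', [/\ Cp E x y s', all (Inv E Z x y) (trs s') &
     count (bad E Z) (trs s') < count (bad E Z) (trs s)].
Proof.
move=> no2 [ne hd lt so un] HI Hin Hbad Hcx.
have Hdis : [disjoint desc E c & Z] by case/and3P: Hbad.
have cnZ : forall w, connect E c w -> w \notin Z.
  by move=> w Hw; rewrite (disjointFr Hdis) // inE.
case/connectP: Hcx => p0 Hp0 Hl0.
move: Hl0; case: (shortenP Hp0) => p' Hp' Hu _ Hl0.
set dd0 := c :: p'.
set dd := rev dd0.
have Ewn : forall v, v \in dd -> v \notin Z.
  by move=> v; rewrite mem_rev => Hv; apply: cnZ; apply: (path_connect Hp').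
have sodd : sorted (fun u v => E v u) dd by rewrite /dd rev_sorted; exact: Hp'.
have hdd : head x dd = x by rewrite /dd /dd0 lastI rev_rcons /= -Hl0.
have udd : uniq dd by rewrite /dd rev_uniq.
have cs : c \in s := in_trs Hin.
have cdd : c \in dd by rewrite mem_rev mem_head.
have Hhas : has (mem dd) s by apply/hasP; exists c.
have [s1 [w [s2 [Es wd Hn]]]] := last_in Hhas.
have wd' : w \in dd := wd.
have [d1 [d2 Ed]] := split_in wd'.
have sow : sorted (fun u v => E v u) (rcons d1 w) by move: sodd; rewrite Ed sorted_catw => /andP[].
have HT : forall t, t \in trs (rcons d1 w) -> Inv E Z x y t && ~~ bad E Z t.
  move=> [[a' b'] c'] Ht; have /andP[E1 E2] := sorted_trs sow Ht.
  have E3 : E a' b' = false by apply/negP => E3; exact: (no2 _ _ E1 E3).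
  have Hb : b' \in dd by rewrite Ed mem_cat (in_trs_rcons Ht).
  by rewrite /Inv /bad E3 /= (Ewn b' Hb).
have HJ : forall t, t \in jn d1 w s2 -> Inv E Z x y t && ~~ bad E Z t.
  move=> [[a' b'] c']; case: d1 {Ed} sow HT => [|z1 d1] // sow _; case: s2 {Es Hn} => [|h s2] //.
  rewrite /jn inE => /eqP[-> -> _].
  have E2 : E w (last z1 d1) by move: sow; rewrite /sorted rcons_cons /= rcons_path => /andP[].
  have E3 : E (last z1 d1) w = false by apply/negP => E3; exact: (no2 _ _ E2 E3).
  by rewrite /Inv /bad E3 /= (Ewn w).
exists (d1 ++ w :: s2); split.
- split.
  + by case: d1 {Ed HT HJ sow}.
  + by move: hdd; rewrite Ed; case: d1 {Ed HT HJ sow}.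
  + by move: lt; rewrite Es !last_cat.
  + rewrite sorted_catw; move: so; rewrite Es sorted_catw => /andP[_ ->]; rewrite andbT.
    by apply: (sub_sorted _ sow) => u v Huv; rewrite /adj /= Huv orbT.
  + rewrite cat_uniq; move: un; rewrite Es cat_uniq => /and3P[_ _ ->].
    move: udd; rewrite Ed cat_uniq => /and3P[-> H1 _]; rewrite andbT.
    apply/negP => /hasP [v Hv Hv1]; move: Hv; rewrite in_cons => /orP[/eqP Hvw|Hv].
      by move/negP: H1; apply; apply/hasP; exists v; rewrite // Hvw mem_head.
    by move/negP: Hn; apply; apply/hasP; exists v; rewrite //= Ed mem_cat Hv1.
- rewrite trs_catw !all_cat; move: HI; rewrite Es trs_catw !all_cat => /and3P[_ _ ->].
  rewrite andbT; apply/andP; split; apply/allP => t Ht.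
    by case/andP: (HT t Ht).
  by case/andP: (HJ t Ht).
- have c0 : forall l, (forall t, t \in l -> Inv E Z x y t && ~~ bad E Z t) -> count (bad E Z) l = 0.
    move=> l Hl; apply/eqP; rewrite -leqn0 leqNgt -has_count; apply/hasPn => t Ht.
    by case/andP: (Hl t Ht).
  rewrite Es !trs_catw !count_cat (c0 _ HJ) (c0 _ HT) !add0n addnA.
  rewrite -[X in X < _]add0n ltn_add2r -count_cat -has_count.
  apply/hasP; exists (a, c, b) => //.
  move: Hin; rewrite Es trs_catw !mem_cat orbA => /orP[] // /in_trs_cons Hc.
  by move/hasP: Hn => []; exists c.
Qed.

Lemma good_of (V : finType) (E : rel V) (Z : {set V}) (x y : V) s :
  all (Inv E Z x y) (trs s) -> ~~ has (bad E Z) (trs s) -> all (fZ E Z) (trs s).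
Proof.
move=> /allP HI /hasPn Hb; apply/allP => -[[a b] c] Ht.
move: (HI _ Ht) (Hb _ Ht); rewrite /Inv /bad /fZ.
by case: (E a b) => //=; case: (E c b) => //= _; rewrite negbK.
Qed.

Lemma main_ind (V : finType) (E : rel V) (Z : {set V}) (x y : V) :
  (forall u v, E u v -> E v u -> False) -> forall n s,
  count (bad E Z) (trs s) <= n -> Cp E x y s -> all (Inv E Z x y) (trs s) ->
  exists s', Cp E x y s' /\ all (fZ E Z) (trs s').
Proof.
move=> no2; elim=> [|n IH] s Hc HC HI.
  exists s; split => //; apply: (good_of HI).
  by rewrite has_count -leqNgt.
case Hb: (has (bad E Z) (trs s)); last by exists s; split => //; apply: (good_of HI); rewrite Hb.
case/hasP: Hb => -[[a c] b] Hin Hbad.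
have HIc := allP HI _ Hin.
have Hcol : E a c && E b c by case/and3P: Hbad => -> ->.
move: HIc; rewrite /Inv Hcol /AE => /orP[Hx|Hy].
  have [s' [HC' HI' Hlt]] := step_bwd no2 HC HI Hin Hbad Hx.
  by apply: (IH s') => //; rewrite -ltnS; apply: leq_trans Hlt Hc.
have [s' [HC' HI' Hlt]] := step_fwd no2 HC HI Hin Hbad Hy.
by apply: (IH s') => //; rewrite -ltnS; apply: leq_trans Hlt Hc.
Qed.

Definition Qc {V : finType} (E : rel V) (P : pred V) (t : V * V * V) : bool :=
  let: (a, b, c) := t in (E a b && E c b) ==> P b.

Lemma fwdP (V : finType) (E : rel V) (P : pred V) :
  (forall u v, E u v -> P v -> P u) ->
  forall p x y, P (last x (y :: p)) -> path (adj E) x (y :: p) ->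
  all (Qc E P) (trs [:: x, y & p]) -> E x y -> P x.
Proof.
move=> Pcl; elim=> [|z p IH] x y.
  by move=> /= Py _ _ Exy; exact: Pcl Exy Py.
move=> Pl /andP[_ Hp]; rewrite trs3 /= => /andP[Q1 HQ] Exy.
apply: (Pcl _ _ Exy).
case Ezy: (E z y).
  by move: Q1; rewrite /Qc Exy Ezy.
apply: (IH y z) => //.
by case/andP: Hp => Hyz _; move: Hyz; rewrite /adj /= Ezy orbF.
Qed.

Lemma allP_AE (V : finType) (E : rel V) (P : pred V) :
  (forall u v, E u v -> P v -> P u) ->
  forall p x, P x -> P (last x p) -> path (adj E) x p ->
  all (Qc E P) (trs (x :: p)) -> all P (x :: p).
Proof.
move=> Pcl; elim=> [|y p IH] x Px Pl Hp HQ; first by rewrite /= Px.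
rewrite /= Px /=.
have Py : P y.
  have /andP[Hxy _] := Hp.
  case Eyx: (E y x); first exact: Pcl Eyx Px.
  move: Hxy; rewrite /adj /= Eyx orbF => Exy.
  case: p IH Pl Hp HQ => [|z p] IH Pl Hp HQ; first exact: Pl.
  move: HQ; rewrite trs3 => /andP[Q1 HQ].
  case Ezy: (E z y); first by move: Q1; rewrite /Qc Exy Ezy.
  apply: (fwdP Pcl (p := p) (x := y) (y := z)) => //.
    by case/andP: Hp.
  by case/andP: Hp => _ /andP[Hyz _]; move: Hyz; rewrite /adj /= Ezy orbF.
apply: (IH y) => //; first by case/andP: Hp.
move: HQ; case: p {IH Pl Hp} => [|z p] //.
by rewrite trs3 /= => /andP[].
Qed.
Theorem lemma1 (V : finType) (e : rel V) (O Pa : {set V}) (X Y : V) :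
  acyclic e ->
  X \in O ->
  Pa \subset O :\: desc e X ->
  (exists Z : {set V}, pi_backdoor e Pa X Y Z) ->
  pi_backdoor e Pa X Y (anc e [set X; Y] :&: Pa).
Proof.
move=> Hac HXO HPa [Z [HZPa HZsep]].
set E := remove_out e X.
have no2 : forall u v, E u v -> E v u -> False.
  move=> u v /andP[h1 _] /andP[h2 _].
  by have := Hac u [:: v; u]; rewrite /= h1 h2 => /(_ isT erefl).
have Esub : forall u v, connect E u v -> connect e u v.
  move=> u v; apply: connect_sub => a b /andP[h _]; exact: connect1.
have anc_rem : forall v w, connect e v w -> connect E v w || connect E v X.
  move=> v w /connectP [q Hq ->]; elim: q v Hq => [|u q IH] v /=; first by rewrite connect0.
  move=> /andP[evu Hq]; case: (eqVneq v X) => [->|vX]; first by rewrite connect0 orbT.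
  have Evu : E v u by rewrite /E /remove_out /= evu vX.
  by case/orP: (IH u Hq) => H; rewrite (connect_trans (connect1 Evu) H) ?orbT.
split; first exact: subsetIr.
move=> p Hp Hl Hu.
apply/blocked_has; rewrite has_predC; apply/negP => Hall.
have AEcl : forall u v, E u v -> AE E X Y v -> AE E X Y u.
  by move=> u v Euv; rewrite /AE => /orP[] H; rewrite (connect_trans (connect1 Euv) H) ?orbT.
have AEZ : forall z, z \in anc e [set X; Y] -> AE E X Y z.
  move=> z; rewrite inE => /existsP[w /andP[Hw Hzw]].
  move: Hw; rewrite !inE => /orP[]/eqP Hw; subst w;
  by case/orP: (anc_rem _ _ Hzw) => H; rewrite /AE H ?orbT.
have HQ : all (Qc E (AE E X Y)) (trs (X :: p)).
  apply/allP => -[[a b] c] Ht; have := allP Hall _ Ht; rewrite /fZ /Qc.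
  case: ifP => //= _; rewrite -setI_eq0 => /set0Pn [z /setIP [Hbz /setIP [Hza _]]].
  rewrite inE in Hbz.
  by have := AEZ z Hza; rewrite /AE => /orP[] H; rewrite (connect_trans Hbz H) ?orbT.
have HA : all (AE E X Y) (X :: p).
  apply: (allP_AE AEcl) => //; first by rewrite /AE connect0.
  by rewrite /AE Hl connect0 orbT.
have HI : all (Inv E Z X Y) (trs (X :: p)).
  apply/allP => -[[a b] c] Ht; have := allP Hall _ Ht; have Hb := allP HA _ (in_trs Ht).
  rewrite /fZ /Inv; case: ifP => // _ HbZ'.
  apply/negP => HbZ; move/negP: HbZ'; apply; rewrite in_setI (subsetP HZPa _ HbZ) andbT.
  rewrite inE; apply/existsP.
  by case/orP: Hb => H; [exists X | exists Y]; rewrite !inE eqxx ?orbT Esub.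
have HC : Cp E X Y (X :: p) by [].
have [s' [[ne hd lt so un] Hg]] := main_ind no2 (leqnn _) HC HI.
case: s' ne hd lt so un Hg => [|z q] // _ /= -> lt so un Hg.
have := HZsep q so lt un.
by move/blocked_has; rewrite has_predC Hg.
Qed.
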